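(* Let $(\mathcal{X},d)$ be a finite metric space $\mathcal{X}=\{x_0,x_1,\dots,x_n\}$ ($n\ge 1$, the $x_i$ pairwise distinct), and let $(\mathcal{Y},\|\cdot\|)$ be a non-trivial, strictly convex real Banach space. Then the set of extreme points of the convex set $\operatorname{Lip}^1_0\subset\mathcal{Y}^{n+1}$ is exactly $\mathcal{E}$, i.e. $\operatorname{ext}(\operatorname{Lip}^1_0)=\mathcal{E}$.
   Context: $\operatorname{Lip}^1_0$ denotes the set of all $y=(y_0,\dots,y_n)\in\mathcal{Y}^{n+1}$ with $y_0=0$ and $\|y_i-y_j\|\le d(x_i,x_j)$ for all $i,j\in\{0,1,\dots,n\}$. An extreme point of a convex set $C$ is a point $y\in C$ such that $y=\lambda y^1+(1-\lambda)y^2$ with $y^1,y^2\in C$, $\lambda\in(0,1)$ implies $y^1=y^2=y$; $\operatorname{ext}(C)$ is the set of extreme points. $\mathcal{E}$ is the set of all $y\in\operatorname{Lip}^1_0$ such that for every $i\in\{1,\dots,n\}$ there exist $k\ge1$ and indices $0=i_0,i_1,\dots,i_k=i$ in $\{0,\dots,n\}$ with $\|y_{i_{j+1}}-y_{i_j}\|=d(x_{i_j},x_{i_{j+1}})$ for every $j=0,\dots,k-1$. *)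

(* Defs.v *)
From mathcomp Require Import all_boot all_order all_algebra.
From mathcomp Require Import all_classical all_reals all_analysis.
Unset Printing Implicit Defensive.
Import Order.TTheory GRing.Theory Num.Theory.
Import numFieldNormedType.Exports.
Local Open Scope ring_scope.
Local Open Scope classical_set_scope.

Definition is_metric {R : realType} {X : Type} (d : X -> X -> R) : Prop :=
  [/\ forall a b, 0 <= d a b,
      forall a b, d a b = 0 <-> a = b,
      forall a b, d a b = d b a &
      forall a b c, d a c <= d a b + d b c].

Definition strictly_convex {R : realType} (Y : normedModType R) : Prop :=
  forall u v : Y, `|u| = 1 -> `|v| = 1 -> u <> v -> `|u + v| < 2.

Definition nontrivial {R : realType} (Y : normedModType R) : Prop :=
  exists y : Y, y <> 0.

Definition Lip10 {R : realType} {X : Type} (Y : normedModType R) (n : nat)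
  (d : X -> X -> R) (x : 'I_n.+1 -> X) : set ('I_n.+1 -> Y) :=
  [set y | y ord0 = 0 /\ forall i j, `|y i - y j| <= d (x i) (x j)].

Definition ext_pts {R : realType} (Y : normedModType R) (n : nat)
  (C : set ('I_n.+1 -> Y)) : set ('I_n.+1 -> Y) :=
  [set y | C y /\
    forall (y1 y2 : 'I_n.+1 -> Y) (l : R), C y1 -> C y2 -> 0 < l < 1 ->
      (forall i, y i = l *: y1 i + (1 - l) *: y2 i) -> y1 = y /\ y2 = y].

Definition Eset {R : realType} {X : Type} (Y : normedModType R) (n : nat)
  (d : X -> X -> R) (x : 'I_n.+1 -> X) : set ('I_n.+1 -> Y) :=
  [set y | Lip10 Y n d x y /\
    forall i : 'I_n.+1, (0 < i)%N ->
      exists (k : nat) (p : nat -> 'I_n.+1),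
        [/\ (1 <= k)%N, p 0%N = ord0, p k = i &
            forall j, (j < k)%N ->
              `|y (p j.+1) - y (p j)| = d (x (p j)) (x (p j.+1))]].

(* Main.v *)
Require Import Defs.
From mathcomp Require Import all_boot all_order all_algebra.
From mathcomp Require Import all_classical all_reals all_analysis.
From mathcomp Require Import lra.
Import Order.TTheory GRing.Theory Num.Theory.
Import numFieldNormedType.Exports.
Local Open Scope ring_scope.
Local Open Scope classical_set_scope.

Lemma sc_scaled (R : realType) (Y : normedModType R) (a b : Y) (D : R) :
  strictly_convex Y -> `|a| = D -> `|b| = D -> 0 < D -> a <> b ->
  `|a + b| < 2 * D.
Proof.
move=> sc na nb D0 ab.
have nu : `|D^-1 *: a| = 1 by rewrite normrZ na ger0_norm ?invr_ge0 ?ltW // mulVf // gt_eqF.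
have nv : `|D^-1 *: b| = 1 by rewrite normrZ nb ger0_norm ?invr_ge0 ?ltW // mulVf // gt_eqF.
have uv : D^-1 *: a <> D^-1 *: b.
  move=> e; apply: ab.
  have := congr1 (fun z => D *: z) e.
  by rewrite !scalerA mulfV ?gt_eqF // !scale1r.
have := sc _ _ nu nv uv.
rewrite -scalerDr normrZ ger0_norm ?invr_ge0 ?ltW //.
by rewrite ltr_pdivrMl // mulrC.
Qed.

Lemma sc_seg (R : realType) (Y : normedModType R) (a b : Y) (D l : R) :
  strictly_convex Y -> `|a| <= D -> `|b| <= D ->
  `|l *: a + (1 - l) *: b| = D -> 0 < l < 1 -> a = b.
Proof.
move=> sc na nb e /andP[l0 l1].
have tri : D <= l * `|a| + (1 - l) * `|b|.
  rewrite -e; apply: (le_trans (ler_normD _ _)).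
  by rewrite !normrZ !ger0_norm //; lra.
have Da : `|a| = D by apply/eqP; rewrite eq_le na /=; nra.
have Db : `|b| = D by apply/eqP; rewrite eq_le nb /=; nra.
have [D0|D0] := eqVneq D 0.
  by move: Da Db; rewrite D0 => /normr0_eq0 -> /normr0_eq0 ->.
have Dp : 0 < D by rewrite lt_def D0 -Da normr_ge0.
apply/eqP/negPn/negP => /eqP ab.
have hab := sc_scaled _ _ _ _ _ sc Da Db Dp ab.
have [lh|lh] := leP l (2^-1).
  have E : l *: a + (1 - l) *: b = l *: (a + b) + (1 - 2 * l) *: b.
    rewrite scalerDr -addrA; congr (_ + _); rewrite -scalerDl; congr (_ *: _); lra.
  have : `|l *: a + (1 - l) *: b| < D.
    rewrite E; apply: (le_lt_trans (ler_normD _ _)).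
    rewrite !normrZ !ger0_norm; [|lra|lra].
    rewrite Db; nra.
  by rewrite e ltxx.
have E : l *: a + (1 - l) *: b = (1 - l) *: (a + b) + (2 * l - 1) *: a.
  rewrite scalerDr addrAC -scalerDl; congr (_ + _); congr (_ *: _); lra.
have : `|l *: a + (1 - l) *: b| < D.
  rewrite E; apply: (le_lt_trans (ler_normD _ _)).
  rewrite !normrZ !ger0_norm; [|lra|lra].
  rewrite Da; nra.
by rewrite e ltxx.
Qed.

Lemma E_sub_ext (R : realType) (Y : normedModType R)
  (X : Type) (d : X -> X -> R) (n : nat) (x : 'I_n.+1 -> X) (y : 'I_n.+1 -> Y) :
  is_metric d -> strictly_convex Y -> Eset Y n d x y -> ext_pts Y n (Lip10 Y n d x) y.
Proof.
move=> [_ _ dsym _] sc [Ly Hp]; split => // y1 y2 l L1 L2 hl hy.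
have key : forall i, y1 i = y i /\ y2 i = y i.
  move=> i; have [i0|ipos] := posnP i.
    have -> : i = ord0 by apply/val_inj.
    by rewrite L1.1 L2.1 Ly.1.
  have [k [p [k1 p0 pk edges]]] := Hp i ipos.
  suff H : forall m, (m <= k)%N -> y1 (p m) = y (p m) /\ y2 (p m) = y (p m).
    by have := H k (leqnn k); rewrite pk.
  elim=> [|m IH] hm; first by rewrite p0 L1.1 L2.1 Ly.1.
  have [e1 e2] := IH (ltnW hm).
  have hd := edges m hm.
  have da : `|y1 (p m.+1) - y1 (p m)| <= d (x (p m)) (x (p m.+1)) by rewrite dsym; apply L1.2.
  have db : `|y2 (p m.+1) - y2 (p m)| <= d (x (p m)) (x (p m.+1)) by rewrite dsym; apply L2.2.
  have ey : y (p m.+1) - y (p m) = l *: (y1 (p m.+1) - y1 (p m)) + (1 - l) *: (y2 (p m.+1) - y2 (p m)).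
    by rewrite (hy (p m.+1)) (hy (p m)) !scalerBr opprD addrACA.
  rewrite ey in hd.
  have ab := sc_seg _ _ _ _ _ _ sc da db hd hl.
  have ya : y (p m.+1) - y (p m) = y1 (p m.+1) - y1 (p m).
    by rewrite ey -ab -scalerDl addrCA subrr addr0 scale1r.
  split.
    by rewrite -[y1 (p m.+1)](subrK (y1 (p m))) -ya e1 subrK.
  by rewrite -[y2 (p m.+1)](subrK (y2 (p m))) -ab -ya e2 subrK.
by split; apply/funext => i; case: (key i).
Qed.

Lemma ext_sub_E (R : realType) (Y : normedModType R)
  (X : Type) (d : X -> X -> R) (n : nat) (x : 'I_n.+1 -> X) (y : 'I_n.+1 -> Y) :
  is_metric d -> nontrivial Y -> ext_pts Y n (Lip10 Y n d x) y -> Eset Y n d x y.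
Proof.
move=> [_ _ dsym _] [e e0] [Ly Hext]; split => //.
pose Rch := fun i : 'I_n.+1 => i = ord0 \/
      exists (k : nat) (p : nat -> 'I_n.+1),
        [/\ (1 <= k)%N, p 0%N = ord0, p k = i &
            forall j, (j < k)%N ->
              `|y (p j.+1) - y (p j)| = d (x (p j)) (x (p j.+1))].
have ext_step : forall i j, Rch j -> `|y i - y j| = d (x j) (x i) -> Rch i.
  move=> i j [->|[k [p [k1 p0 pk hp]]]] t; right.
    exists 1%N, (fun m => if m == 0%N then ord0 else i); split => //.
    by move=> j'; rewrite ltnS leqn0 => /eqP -> /=.
  exists k.+1, (fun m => if m == k.+1 then i else p m); split => //.
    by rewrite eqxx.
  move=> m; rewrite ltnS leq_eqVlt => /orP[/eqP ->|mk].
    by rewrite eqxx eqn_leq ltnn andbF pk.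
  have mk1 : (m.+1 < k.+1)%N by [].
  have mk2 : (m < k.+1)%N by apply: ltnW.
  by rewrite (ltn_eqF mk1) (ltn_eqF mk2); apply: hp.
pose s := fun ij : 'I_n.+1 * 'I_n.+1 => d (x ij.1) (x ij.2) - `|y ij.1 - y ij.2|.
pose del := \big[Num.min/1]_(ij | 0 < s ij) s ij.
have delpos : 0 < del by apply/bigmin_gtP; split => // ij.
have delle : forall ij, 0 < s ij -> del <= s ij by move=> ij; apply: bigmin_le_cond.
pose pert := fun (w : Y) i => y i + (if pselect (Rch i) then 0 else w).
have L : forall w, `|w| <= del -> Lip10 Y n d x (pert w).
  move=> w hw; split.
    rewrite /pert; case: pselect => h; first by rewrite addr0 Ly.1.
    by exfalso; apply: h; left.
  move=> i j; rewrite /pert; case: pselect => hi; case: pselect => hj.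
  - by rewrite !addr0; apply: Ly.2.
  - have nt : `|y i - y j| != d (x i) (x j).
      apply/eqP => t; apply: hj; apply: (ext_step j i hi).
      by rewrite distrC t.
    have sp : 0 < s (i, j) by rewrite /s /= subr_gt0 lt_neqAle nt Ly.2.
    have := delle _ sp; rewrite /s /= => h.
    rewrite addr0 opprD addrA; apply: (le_trans (ler_normB _ _)); lra.
  - have nt : `|y i - y j| != d (x i) (x j).
      apply/eqP => t; apply: hi; apply: (ext_step i j hj).
      by rewrite t dsym.
    have sp : 0 < s (i, j) by rewrite /s /= subr_gt0 lt_neqAle nt Ly.2.
    have := delle _ sp; rewrite /s /= => h.
    rewrite addr0 addrAC; apply: (le_trans (ler_normD _ _)); lra.
  - by rewrite opprD addrACA subrr addr0; apply: Ly.2.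
have Rall : forall i, Rch i.
  move=> i; case: (pselect (Rch i)) => // hi.
  have ne : `|e| != 0 by rewrite normr_eq0; apply/eqP.
  have nep : 0 < `|e| by rewrite lt_def ne normr_ge0.
  pose w := (del / `|e|) *: e.
  have nw : `|w| = del.
    by rewrite normrZ ger0_norm ?divfK // ltW // divr_gt0.
  have h2 : (1 - 2^-1 : R) = 2^-1 by lra.
  have h1 : (2^-1 + 2^-1 : R) = 1 by lra.
  have hl : (0 : R) < (2 : R)^-1 < 1.
    have a1 : (0:R) < 2^-1 by lra.
    have a2 : (2^-1:R) < 1 by lra.
    by rewrite a1 a2.
  have hdec : forall j, y j = 2^-1 *: pert w j + (1 - 2^-1) *: pert (- w) j.
    move=> j; rewrite h2 /pert; case: pselect => hj.
      by rewrite !addr0 -scalerDl h1 scale1r.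
    by rewrite -scalerDr addrACA subrr addr0 scalerDr -scalerDl h1 scale1r.
  have Lm : Lip10 Y n d x (pert (- w)) by apply: L; rewrite normrN nw.
  have Lp : Lip10 Y n d x (pert w) by apply: L; rewrite nw.
  have [h _] := Hext _ _ _ Lp Lm hl hdec.
  have := congr1 (fun f => f i) h; rewrite /pert; case: pselect => // hh.
  move/(congr1 (fun z => z - y i)); rewrite addrAC subrr add0r => /eqP; rewrite scaler_eq0 => /orP[|/eqP//].
  by rewrite mulf_eq0 invr_eq0 (negbTE ne) orbF gt_eqF.
move=> i ipos; case: (Rall i) => // i0.
by rewrite i0 in ipos.
Qed.

Theorem theorem1 (R : realType) (Y : completeNormedModType R)
  (X : Type) (d : X -> X -> R) (n : nat) (x : 'I_n.+1 -> X) :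
  is_metric d -> (1 <= n)%N -> injective x ->
  nontrivial Y -> strictly_convex Y ->
  ext_pts Y n (Lip10 Y n d x) = Eset Y n d x.
Proof.
move=> md _ _ nt sc; apply/seteqP; split => y.
  exact: ext_sub_E.
exact: E_sub_ext.
Qed.
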